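(* Let $k\ge1$ and let $M^*$ be constructed from quadrature rules $Q_i^k$ as in the context (with $Q_i^k$ exact on $\mathbb P^{k-1}(I_i)$). Then the bilinear form $(v,\omega)\mapsto (v,M^*\omega)$ is an inner product on $\mathbb V^k$ if and only if for every cell $I_i$ both of the following hold: (1) $R_i^k(v)=0$ for all $v\in\mathbb P^{2k-1}(I_i)$; (2) $\frac{h_i}{2k-1}-Q_i^k(L_{i,k+1}L_{i,k-1})>0$.
   Context: Let $\Omega=[a,b]$ be partitioned into finitely many cells $I_i=[x_{i-\frac12},x_{i+\frac12}]$ with sizes $h_i=x_{i+\frac12}-x_{i-\frac12}$. $(\cdot,\cdot)$ is the $L^2(\Omega)$ inner product and $(\cdot,\cdot)_{I_i}$ the $L^2(I_i)$ inner product. $\mathbb V^k=\{v\in L^2(\Omega): v|_{I_i}\in\mathbb P^k(I_i)\ \forall i\}$. Each $I_i$ has subdivision points $x_{i-\frac12}=x_{i,0}<x_{i,1}<\dots<x_{i,k}<x_{i,k+1}=x_{i+\frac12}$ and control volumes $I_{i,j}=[x_{i,j},x_{i,j+1}]$, $j=0,\dots,k$; $\mathbb V^{k,*}$ is the space of functions constant on each $I_{i,j}$. On each $I_i$ a quadrature $Q_i^k(v)=\sum_{j=0}^{k+1}A_{i,j}v(x_{i,j})$ is given, with error $R_i^k(v)=\int_{I_i}v\,dx-Q_i^k(v)$, and it is assumed that $R_i^k(v)=0$ for all $v\in\mathbb P^{k-1}(I_i)$. The operator $M^*:\mathbb V^k\to\mathbb V^{k,*}$ is defined cellwise: for $v=\omega|_{I_i}$,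 $(M^*\omega)|_{I_{i,0}}=v(x_{i-\frac12})+A_{i,0}v'(x_{i-\frac12})$ and $(M^*\omega)|_{I_{i,j}}-(M^*\omega)|_{I_{i,j-1}}=A_{i,j}v'(x_{i,j})$, $j=1,\dots,k$ (values and derivatives at endpoints taken from inside $I_i$). $L_{i,\ell}$ denotes the shifted Legendre polynomial of degree $\ell$ on $I_i$ (the Legendre polynomial $P_\ell$ composed with the affine map of $I_i$ onto $[-1,1]$), so that $L_{i,\ell}(x_{i+\frac12})=1$ and $(L_{i,\ell},L_{i,m})_{I_i}=\delta_{\ell m}\,h_i/(2\ell+1)$. *)

(* Defs.v *)
(* All objects of the statement are polynomials (on each cell)
   or piecewise constants (on each control volume), so every L^2 integral that
   occurs is an integral of a polynomial over an interval; it is computed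
   exactly via the polynomial antiderivative. *)
From HB Require Import structures.
From mathcomp Require Import all_boot all_order all_algebra.
From mathcomp Require Import reals.
Set Implicit Arguments. Unset Strict Implicit. Unset Printing Implicit Defensive.
Import Order.TTheory GRing.Theory Num.Theory.
Local Open Scope ring_scope.

Section Defs.
Variable R : realType.

Definition poly_prim (p : {poly R}) : {poly R} :=
  \poly_(i < (size p).+1) (if i is j.+1 then p`_j / j.+1%:R else 0).

Definition poly_int (p : {poly R}) (a b : R) : R :=
  (poly_prim p).[b] - (poly_prim p).[a].

(* Legendre polynomials on [-1,1] via Bonnet's recurrence:
   legP n = (P_n, P_{n+1}), (n+2) P_{n+2} = (2n+3) X P_{n+1} - (n+1) P_n. *)
Fixpoint legP (n : nat) : {poly R} * {poly R} :=
  match n with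
  | 0 => (1, 'X)
  | n'.+1 => let: (p, q) := legP n' in
             (q, (n'.+2%:R)^-1 *: ((n'.*2.+3)%:R *: ('X * q) - (n'.+1)%:R *: p))
  end.
Definition legendre (n : nat) : {poly R} := (legP n).1.

Definition shifted_legendre (xl xr : R) (l : nat) : {poly R} :=
  legendre l \Po (((xr - xl)^-1 *: ('X *+ 2 - (xl + xr)%:P))).

(* ---- mesh data ----
   N cells; cell i (0 <= i < N) is I_i = [xb i, xb (i+1)] (= [x_{i-1/2}, x_{i+1/2}]);
   xs i j = x_{i,j} (0 <= j <= k+1) are the subdivision points of I_i;
   A i j = A_{i,j} (0 <= j <= k+1) are the quadrature weights on I_i.
   An element of V^k is a family v : nat -> {poly R}, v i = v|_{I_i}. *)

Definition in_Vk (k N : nat) (v : nat -> {poly R}) : Prop :=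
  forall i, (i < N)%N -> (size (v i) <= k.+1)%N.

Definition quad (k : nat) (xs A : nat -> nat -> R) (i : nat) (v : {poly R}) : R :=
  \sum_(j < k.+2) A i j * v.[xs i j].

Definition quad_err (k : nat) (xb : nat -> R) (xs A : nat -> nat -> R)
    (i : nat) (v : {poly R}) : R :=
  poly_int v (xb i) (xb i.+1) - quad k xs A i v.

(* value of M^* omega on the control volume I_{i,j} (0 <= j <= k), where
   v = omega|_{I_i}:  v(x_{i,0}) + sum_{m=0}^{j} A_{i,m} v'(x_{i,m}) *)
Definition Mstar_val (xs A : nat -> nat -> R) (i : nat) (v : {poly R}) (j : nat) : R :=
  v.[xs i 0%N] + \sum_(m < j.+1) A i m * (v^`()).[xs i m].

Definition Mstar_form (k N : nat) (xs A : nat -> nat -> R)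
    (v w : nat -> {poly R}) : R :=
  \sum_(i < N) \sum_(j < k.+1)
     Mstar_val xs A i (w i) j * poly_int (v i) (xs i j) (xs i j.+1).

(* the (automatically bilinear) form is an inner product on V^k:
   symmetric and positive definite *)
Definition is_inner_product_on_Vk (k N : nat) (xs A : nat -> nat -> R) : Prop :=
  (forall v w, in_Vk k N v -> in_Vk k N w ->
      Mstar_form k N xs A v w = Mstar_form k N xs A w v) /\
  (forall v, in_Vk k N v -> (exists i, (i < N)%N /\ v i != 0) ->
      0 < Mstar_form k N xs A v v).

End Defs.

(* Main.v *)
Require Import Defs.
From HB Require Import structures.
From mathcomp Require Import all_boot all_order all_algebra.
From mathcomp Require Import reals.
From mathcomp Require Import polyrcf.
From mathcomp Require Import ring lra.
Import Order.TTheory GRing.Theory Num.Theory.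
Local Open Scope ring_scope.
From mathcomp Require Import zify.
Lemma deriv0_const {R : realType} (P : {poly R}) : P^`() = 0 -> P = (P`_0)%:P.
Proof.
move=> H; apply/polyP => i; rewrite coefC; case: i => [|i] //=.
have := congr1 (fun q : {poly R} => q`_i) H; rewrite coef_deriv coef0 => /eqP.
by rewrite -mulr_natr mulf_eq0 pnatr_eq0 orbF => /eqP.
Qed.

Lemma divn_aux (F : fieldType) (x : F) n : (n%:R : F) != 0 -> x / n%:R *+ n = x.
Proof. by move=> H; rewrite -mulr_natr divfK. Qed.

Lemma poly_prim_deriv {R : realType} (p : {poly R}) : (poly_prim p)^`() = p.
Proof.
apply/polyP => i; rewrite coef_deriv /poly_prim coef_poly.
case: ltnP => H /=.
  by apply: divn_aux; rewrite pnatr_eq0.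
by rewrite nth_default //; apply: mul0rn.
Qed.

Lemma poly_prim0 {R : realType} (p : {poly R}) : (poly_prim p).[0] = 0.
Proof. by rewrite horner_coef0 /poly_prim coef_poly. Qed.

Lemma poly_intE {R : realType} (p P : {poly R}) a b :
  P^`() = p -> poly_int p a b = P.[b] - P.[a].
Proof.
move=> H.
have: (poly_prim p - P)^`() = 0 by rewrite derivB poly_prim_deriv H subrr.
move/deriv0_const => E.
rewrite /poly_int.
have -> : poly_prim p = P + ((poly_prim p - P)`_0)%:P by rewrite -E; ring.
rewrite !hornerD !hornerC; ring.
Qed.

Lemma poly_intD {R : realType} (p q : {poly R}) a b :
  poly_int (p + q) a b = poly_int p a b + poly_int q a b.
Proof.
rewrite (@poly_intE _ _ (poly_prim p + poly_prim q)) ?derivD ?poly_prim_deriv //.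
rewrite /poly_int !hornerD; ring.
Qed.

Lemma poly_intZ {R : realType} (c : R) (p : {poly R}) a b :
  poly_int (c *: p) a b = c * poly_int p a b.
Proof.
rewrite (@poly_intE _ _ (c *: poly_prim p)) ?derivZ ?poly_prim_deriv //.
rewrite /poly_int !hornerZ; ring.
Qed.

Lemma poly_intN {R : realType} (p : {poly R}) a b :
  poly_int (- p) a b = - poly_int p a b.
Proof. by rewrite -scaleN1r poly_intZ mulN1r. Qed.

Lemma poly_intB {R : realType} (p q : {poly R}) a b :
  poly_int (p - q) a b = poly_int p a b - poly_int q a b.
Proof. by rewrite poly_intD poly_intN. Qed.

Lemma poly_int0 {R : realType} a b : poly_int (0 : {poly R}) a b = 0.
Proof. by rewrite -(scale0r (0 : {poly R})) poly_intZ mul0r. Qed.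

Lemma quadD {R : realType} k xs A i (p q : {poly R}) :
  quad k xs A i (p + q) = quad k xs A i p + quad k xs A i q.
Proof. by rewrite /quad -big_split; apply: eq_bigr => j _; rewrite hornerD mulrDr. Qed.

Lemma quadZ {R : realType} k xs A i (c : R) (p : {poly R}) :
  quad k xs A i (c *: p) = c * quad k xs A i p.
Proof. by rewrite /quad mulr_sumr; apply: eq_bigr => j _; rewrite hornerZ; ring. Qed.

Lemma quad_errD {R : realType} k xb xs A i (p q : {poly R}) :
  quad_err k xb xs A i (p + q) = quad_err k xb xs A i p + quad_err k xb xs A i q.
Proof. rewrite /quad_err poly_intD quadD; ring. Qed.

Lemma quad_errZ {R : realType} k xb xs A i (c : R) (p : {poly R}) :
  quad_err k xb xs A i (c *: p) = c * quad_err k xb xs A i p.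
Proof. rewrite /quad_err poly_intZ quadZ; ring. Qed.

Lemma quad_errN {R : realType} k xb xs A i (p : {poly R}) :
  quad_err k xb xs A i (- p) = - quad_err k xb xs A i p.
Proof. by rewrite -scaleN1r quad_errZ mulN1r. Qed.

Lemma quad_errB {R : realType} k xb xs A i (p q : {poly R}) :
  quad_err k xb xs A i (p - q) = quad_err k xb xs A i p - quad_err k xb xs A i q.
Proof. by rewrite quad_errD quad_errN. Qed.

Lemma quad_err0 {R : realType} k xb xs A i : quad_err k xb xs A i (0 : {poly R}) = 0.
Proof. by rewrite -(scale0r (0 : {poly R})) quad_errZ mul0r. Qed.

Definition Wf {R : realType} (xr : R) (u : {poly R}) : {poly R} :=
  ((poly_prim u).[xr])%:P - poly_prim u.

Definition Bdef {R : realType} k (xb : nat -> R) xs A i (u w : {poly R}) : R :=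
  quad_err k xb xs A i (w^`() * Wf (xb i.+1) u).

Definition cellform {R : realType} k (xs A : nat -> nat -> R) i (u w : {poly R}) : R :=
  \sum_(j < k.+1) Mstar_val xs A i w j * poly_int u (xs i j) (xs i j.+1).

Lemma telescope_aux {R : realType} K (a : R) (b U : nat -> R) :
  \sum_(j < K) (a + \sum_(m < j.+1) b m) * (U j.+1 - U j)
  = a * (U K - U 0%N) + \sum_(m < K) b m * (U K - U m).
Proof.
elim: K => [|K IH]; first by rewrite !big_ord0 subrr; ring.
rewrite big_ord_recr /= IH !big_ord_recr /=.
have -> : \sum_(i < K) b i * (U K.+1 - U i) =
   \sum_(i < K) b i * (U K - U i) + (\sum_(i < K) b i) * (U K.+1 - U K).
  by rewrite mulr_suml -big_split; apply: eq_bigr => j _ /=; ring.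
ring.
Qed.

Lemma WfE {R : realType} (xr : R) u : (Wf xr u)^`() = - u.
Proof. by rewrite /Wf derivB derivC poly_prim_deriv sub0r. Qed.

Lemma Wf_xr {R : realType} (xr : R) u : (Wf xr u).[xr] = 0.
Proof. by rewrite /Wf hornerD hornerN hornerC subrr. Qed.

Lemma cell_identity {R : realType} k (xb : nat -> R) xs A i (u w : {poly R}) :
  xs i 0%N = xb i -> xs i k.+1 = xb i.+1 ->
  cellform k xs A i u w = poly_int (u * w) (xb i) (xb i.+1) - Bdef k xb xs A i u w.
Proof.
move=> H0 H1.
rewrite /cellform /Mstar_val /poly_int.
rewrite (telescope_aux (k.+1) (w.[xs i 0%N]) (fun m => A i m * (w^`()).[xs i m])
          (fun j => (poly_prim u).[xs i j])).
rewrite /Bdef /quad_err /quad [\sum_(j < k.+2) _]big_ord_recr /=.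
rewrite (@poly_intE _ _ (w * Wf (xb i.+1) u + poly_prim (u * w))); last first.
  by rewrite derivD derivM WfE poly_prim_deriv; ring.
rewrite H1 hornerM Wf_xr mulr0 mulr0 addr0 !hornerD !hornerM Wf_xr H0.
have -> : \sum_(j < k.+1) A i j * (w^`() * Wf (xb i.+1) u).[xs i j] = \sum_(j < k.+1) A i j * w^`().[xs i j] * ((poly_prim u).[xb i.+1] - (poly_prim u).[xs i j]).
  by apply eq_bigr => j _; rewrite hornerM /Wf hornerD hornerN hornerC mulrA.
rewrite /Wf hornerD hornerN hornerC -H0. ring.
Qed.

Lemma legS {R : realType} n : legendre R n.+1 = (legP R n).2.
Proof. by rewrite /legendre /=; case: (legP R n). Qed.

Lemma leg0 {R : realType} : legendre R 0 = 1.
Proof. by []. Qed.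

Lemma leg1 {R : realType} : legendre R 1 = 'X.
Proof. by []. Qed.

Lemma leg_rec0 {R : realType} n : legendre R n.+2 =
  (n.+2%:R)^-1 *: ((n.*2.+3)%:R *: ('X * legendre R n.+1) - (n.+1)%:R *: legendre R n).
Proof. by rewrite legS /= legS /legendre; case: (legP R n). Qed.

Lemma leg_rec {R : realType} n : (n.+2%:R : R) *: legendre R n.+2 =
  (n.*2.+3)%:R *: ('X * legendre R n.+1) - (n.+1)%:R *: legendre R n.
Proof. by rewrite leg_rec0 scalerA mulfV ?scale1r // pnatr_eq0. Qed.

Lemma leg_rec_all {R : realType} n : (n.+1%:R : R) *: legendre R n.+1 =
  (n.*2.+1)%:R *: ('X * legendre R n) - n%:R *: legendre R n.-1.
Proof.
case: n => [|n]; first by rewrite leg1 leg0 !scale1r scale0r subr0 mulr1.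
by rewrite leg_rec.
Qed.

Lemma leg_deriv_pair {R : realType} n :
  (legendre R n.+1)^`() = 'X * (legendre R n)^`() + (n.+1)%:R *: legendre R n /\
  'X * (legendre R n.+1)^`() - (legendre R n)^`() = (n.+1)%:R *: legendre R n.+1.
Proof.
elim: n => [|n [IHA IHB]].
  rewrite leg1 leg0 derivX derivC scale1r mulr0 add0r subr0 mulr1; split => //.
  by rewrite scale1r.
have hA : (legendre R n.+2)^`() = 'X * (legendre R n.+1)^`() + (n.+2)%:R *: legendre R n.+1.
  apply: (@scalerI _ _ (n.+2%:R : R)); first by rewrite pnatr_eq0.
  rewrite -derivZ leg_rec derivB !derivZ derivM derivX.
  have E : (legendre R n)^`() = 'X * (legendre R n.+1)^`() - (n.+1)%:R *: legendre R n.+1.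
    by rewrite -IHB; ring.
  rewrite E !scaler_nat -!addnn. ring.
split => //.
rewrite hA.
apply: (@scalerI _ _ (n.+2%:R : R)); first by rewrite pnatr_eq0.
rewrite scalerA mulrC -scalerA leg_rec.
have E : (legendre R n)^`() = 'X * (legendre R n.+1)^`() - (n.+1)%:R *: legendre R n.+1.
  by rewrite -IHB; ring.
have E2 : (n.+1)%:R *: legendre R n = (legendre R n.+1)^`() - 'X * (legendre R n)^`().
  by rewrite IHA; ring.
rewrite E2 E !scaler_nat -!addnn. ring.
Qed.

Lemma leg_antideriv {R : realType} n :
  (legendre R n.+2 - legendre R n)^`() = (n.*2.+3)%:R *: legendre R n.+1.
Proof.
have [A1 _] := leg_deriv_pair (R:=R) n.+1.
have [_ B0] := leg_deriv_pair (R:=R) n.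
rewrite derivB A1.
have -> : (legendre R n)^`() = 'X * (legendre R n.+1)^`() - (n.+1)%:R *: legendre R n.+1.
  by rewrite -B0; ring.
rewrite !scaler_nat -!addnn. ring.
Qed.

Lemma leg_at1 {R : realType} n : (legendre R n).[1] = 1 /\ (legendre R n.+1).[1] = 1.
Proof.
elim: n => [|n [IH1 IH2]]; first by rewrite leg0 leg1 hornerC hornerX.
split => //.
apply: (@mulfI _ (n.+2%:R : R)); first by rewrite pnatr_eq0.
rewrite -hornerZ leg_rec !(hornerD, hornerN, hornerZ, hornerM, hornerX) IH1 IH2.
rewrite -addnn. ring.
Qed.

Lemma leg_atm1 {R : realType} n : (legendre R n).[-1] = (-1) ^+ n /\ (legendre R n.+1).[-1] = (-1) ^+ n.+1.
Proof.
elim: n => [|n [IH1 IH2]]; first by rewrite leg0 leg1 hornerC hornerX expr1.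
split => //.
apply: (@mulfI _ (n.+2%:R : R)); first by rewrite pnatr_eq0.
rewrite -hornerZ leg_rec !(hornerD, hornerN, hornerZ, hornerM, hornerX) IH1 IH2.
rewrite !exprS -addnn. ring.
Qed.

Definition Lint {R : realType} (p : {poly R}) : R := poly_int p (-1) 1.

Lemma Lint_leg {R : realType} n : Lint (legendre R n.+1) = 0.
Proof.
rewrite /Lint (@poly_intE _ _ ((n.*2.+3%:R : R)^-1 *: (legendre R n.+2 - legendre R n))).
  rewrite !hornerZ !hornerD !hornerN.
  have [a1 a2] := leg_at1 (R:=R) n.+1.
  have [b1 b2] := leg_atm1 (R:=R) n.+1.
  have [c1 c2] := leg_at1 (R:=R) n.
  have [d1 d2] := leg_atm1 (R:=R) n.
  rewrite a2 c1 b2 d1 !exprS; ring.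
by rewrite derivZ leg_antideriv scalerA mulVf ?scale1r // pnatr_eq0.
Qed.

Lemma Lint_lin {R : realType} (a b : R) (p q : {poly R}) :
  Lint (a *: p + b *: q) = a * Lint p + b * Lint q.
Proof. by rewrite /Lint poly_intD !poly_intZ. Qed.

Lemma leg_X {R : realType} n m :
  (n.*2.+1)%:R *: (legendre R n * ('X * legendre R m)) =
  (n.+1)%:R *: (legendre R n.+1 * legendre R m) + n%:R *: (legendre R n.-1 * legendre R m).
Proof.
rewrite [(n.+1)%:R *: _]scalerAl leg_rec_all !scaler_nat. ring.
Qed.

Definition Orth {R : realType} m := forall n, (m < n)%N -> Lint (legendre R n * legendre R m) = 0.

Lemma orth0 {R : realType} : Orth (R:=R) 0.
Proof. by case=> [|n] // _; rewrite leg0 mulr1 Lint_leg. Qed.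

Lemma orth_step {R : realType} m : Orth (R:=R) m.-1 -> Orth (R:=R) m -> Orth (R:=R) m.+1.
Proof.
rewrite /Orth /Lint => Om1 Om n Hn.
have HX : poly_int (legendre R n * ('X * legendre R m)) (-1) 1 = 0.
  have := congr1 (fun p => poly_int p (-1) 1) (leg_X (R:=R) n m).
  rewrite /= poly_intD !poly_intZ (Om n.+1) ?(Om n.-1); try lia.
  rewrite !mulr0 addr0 => /eqP; rewrite mulf_eq0 pnatr_eq0 /= => /eqP //.
have E : legendre R n * ((m.+1)%:R *: legendre R m.+1) =
    (m.*2.+1)%:R *: (legendre R n * ('X * legendre R m)) - m%:R *: (legendre R n * legendre R m.-1).
  rewrite leg_rec_all !scaler_nat. ring.
have := congr1 (fun p => poly_int p (-1) 1) E.
rewrite /= poly_intB !poly_intZ -scalerAr poly_intZ HX (Om1 n); last by lia.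
rewrite !mulr0 subrr => /eqP; rewrite mulf_eq0 pnatr_eq0 /= => /eqP //.
Qed.

Lemma leg_orth {R : realType} m n : (m < n)%N -> Lint (legendre R n * legendre R m) = 0.
Proof.
have : Orth (R:=R) m /\ Orth (R:=R) m.+1.
  elim: m => [|m [IH1 IH2]]; first by split; [exact: orth0 | apply: orth_step; exact: orth0].
  by split => //; apply: orth_step.
by case=> H _; apply: H.
Qed.

Lemma leg_norm {R : realType} n : Lint (legendre R n * legendre R n) * (n.*2.+1)%:R = 2.
Proof.
elim: n => [|n IH].
  rewrite leg0 mulr1 mulr1 /Lint (@poly_intE _ _ 'X) ?derivX // !hornerX; ring.
set N0 := Lint (legendre R n * legendre R n) in IH.
set N1 := Lint (legendre R n.+1 * legendre R n.+1).
set T := Lint (legendre R n.+1 * ('X * legendre R n)).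
have E1 : n.+1%:R * N1 = n.*2.+1%:R * T.
  have E : legendre R n.+1 * ((n.+1)%:R *: legendre R n.+1) =
    (n.*2.+1)%:R *: (legendre R n.+1 * ('X * legendre R n)) - n%:R *: (legendre R n.+1 * legendre R n.-1).
    rewrite leg_rec_all !scaler_nat. ring.
  have := congr1 Lint E.
  rewrite /Lint poly_intB !poly_intZ -scalerAr poly_intZ -!/(Lint _).
  rewrite (@leg_orth _ n.-1 n.+1); last by lia.
  by rewrite mulr0 subr0.
have E2 : n.+1.*2.+1%:R * T = n.+1%:R * N0.
  have := congr1 Lint (leg_X (R:=R) n.+1 n).
  rewrite /Lint poly_intD !poly_intZ -!/(Lint _).
  rewrite (@leg_orth _ n n.+2) //= mulr0 add0r.
  by rewrite /T /N0 /Lint; apply.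
apply: (@mulfI _ (n.+1%:R : R)); first by rewrite pnatr_eq0.
rewrite mulrA E1 -mulrA [T * _]mulrC E2.
rewrite -IH. rewrite -!addnn. ring.
Qed.

Lemma size_Xmul {R : realType} (p : {poly R}) : (size ('X * p)%R <= (size p).+1)%N.
Proof.
apply/leq_sizeP => -[|j] hj //; rewrite coefXM /= nth_default //.
Qed.

Lemma leg_size {R : realType} n : (size (legendre R n) <= n.+1)%N /\ (size (legendre R n.+1) <= n.+2)%N.
Proof.
elim: n => [|n [IH1 IH2]]; first by rewrite leg0 leg1 size_poly1 size_polyX.
split => //.
rewrite leg_rec0.
apply: (leq_trans (size_scale_leq _ _)).
apply/leq_sizeP => -[|j] hj //.
rewrite coefB !coefZ coefXM /=.
rewrite (@nth_default _ _ (legendre R n)); last by lia.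
rewrite (@nth_default _ _ (legendre R n.+1)); last by lia.
by rewrite !mulr0 subr0.
Qed.

Lemma coef_mul_top {R : realType} (p q : {poly R}) a b :
  (size p <= a.+1)%N -> (size q <= b.+1)%N -> (p * q)`_(a + b) = p`_a * q`_b.
Proof.
move=> hp hq.
have ha : (a < (a + b).+1)%N by lia.
rewrite coefM (bigD1 (Ordinal ha)) //= big1 ?addr0; first by rewrite addKn.
move=> j /eqP hj.
have hj' : nat_of_ord j <> a by move=> E; apply: hj; apply: val_inj.
case: (ltnP a j) => H.
  by rewrite (@nth_default _ _ p) ?mul0r //; lia.
rewrite (@nth_default _ _ q) ?mulr0 //.
have := ltn_ord j; lia.
Qed.

Lemma leg_coef {R : realType} n :
  (n.+1)%:R * (legendre R n.+1)`_n.+1 = (n.*2.+1)%:R * (legendre R n)`_n.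
Proof.
have := congr1 (fun p : {poly R} => p`_n.+1) (leg_rec_all (R:=R) n).
rewrite /= !coefZ coefB !coefZ coefXM /= => ->.
rewrite (@nth_default _ _ (legendre R n.-1)) ?mulr0 ?subr0 //.
case: n => [|n] /=; first by rewrite leg0 size_poly1.
by have [h _] := leg_size (R:=R) n; apply: (leq_trans h).
Qed.

Lemma leg_coef_pos {R : realType} n : 0 < (legendre R n)`_n.
Proof.
elim: n => [|n IH]; first by rewrite leg0 coef1.
have := leg_coef (R:=R) n => E.
have -> : (legendre R n.+1)`_n.+1 = (n.+1%:R)^-1 * ((n.*2.+1)%:R * (legendre R n)`_n).
  by rewrite -E mulrA mulVf ?mul1r // pnatr_eq0.
by rewrite mulr_gt0 ?invr_gt0 ?ltr0n // mulr_gt0 // ltr0n.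
Qed.

Lemma leg_size_eq {R : realType} n : size (legendre R n) = n.+1.
Proof.
have [h _] := leg_size (R:=R) n.
apply/eqP; rewrite eqn_leq h /=.
have := leg_coef_pos (R:=R) n; apply: contraTT; rewrite -leqNgt => H.
by rewrite nth_default ?ltxx.
Qed.

Definition phi {R : realType} (xl xr : R) : {poly R} :=
  (xr - xl)^-1 *: ('X *+ 2 - (xl + xr)%:P).

Lemma phi_horner {R : realType} (xl xr x : R) :
  (phi xl xr).[x] = (xr - xl)^-1 * (x * 2 - (xl + xr)).
Proof.
by rewrite /phi hornerZ hornerD hornerN hornerMn hornerX hornerC mulr_natr.
Qed.

Lemma phi_deriv {R : realType} (xl xr : R) : (phi xl xr)^`() = ((xr - xl)^-1 * 2)%:P.
Proof.
rewrite /phi derivZ derivB derivMn derivX derivC subr0.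
by rewrite -mul_polyC polyCM -polyCMn.
Qed.

Lemma phi_coef {R : realType} (xl xr : R) :
  (phi xl xr)`_1 = (xr - xl)^-1 * 2 /\ (size (phi xl xr) <= 2)%N.
Proof.
split.
  by rewrite /phi coefZ coefB coefMn coefX coefC /= subr0.
apply/leq_sizeP => -[|[|j]] // _.
by rewrite /phi coefZ coefB coefMn coefX coefC /= mul0rn subr0 mulr0.
Qed.

Lemma phi_size {R : realType} (xl xr : R) : xl < xr -> size (phi xl xr) = 2.
Proof.
move=> h; have [c1 s2] := phi_coef xl xr.
apply/eqP; rewrite eqn_leq s2 /=.
rewrite ltnNge; apply/negP => H.
have : (phi xl xr)`_1 = 0 by rewrite nth_default.
rewrite c1 => /eqP; rewrite mulf_eq0 invr_eq0 subr_eq0 pnatr_eq0 orbF.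
by rewrite gt_eqF.
Qed.

Lemma int_comp {R : realType} (xl xr : R) (p : {poly R}) : xl < xr ->
  poly_int (p \Po phi xl xr) xl xr = (xr - xl) / 2 * Lint p.
Proof.
move=> h.
have hn : xr - xl != 0 by rewrite subr_eq0 gt_eqF.
rewrite (@poly_intE _ _ (((xr - xl) / 2) *: (poly_prim p \Po phi xl xr))); last first.
  rewrite derivZ deriv_comp poly_prim_deriv phi_deriv [_ * _%:P]mulrC mul_polyC scalerA.
  have -> : (xr - xl) / 2 * ((xr - xl)^-1 * 2) = 1 by field; rewrite hn.
  by rewrite scale1r.
rewrite !hornerZ !horner_comp !phi_horner /Lint /poly_int -mulrBr.
congr (_ * (_ - _)); congr (poly_prim p).[_]; field; by rewrite hn.
Qed.

Lemma S_def {R : realType} (xl xr : R) n :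
  shifted_legendre xl xr n = legendre R n \Po phi xl xr.
Proof. by []. Qed.

Lemma S_size {R : realType} (xl xr : R) n : xl < xr ->
  size (shifted_legendre xl xr n) = n.+1.
Proof. by move=> h; rewrite S_def size_comp_poly2 ?phi_size // leg_size_eq. Qed.

Lemma S_coef {R : realType} (xl xr : R) n : xl < xr ->
  (shifted_legendre xl xr n)`_n = (legendre R n)`_n * ((xr - xl)^-1 * 2) ^+ n.
Proof.
move=> h.
have := lead_coef_comp (legendre R n) (_ : (1 < size (phi xl xr))%N).
rewrite phi_size // => /(_ isT).
rewrite /lead_coef -S_def S_size // leg_size_eq /= => ->.
by rewrite phi_size //= (phi_coef xl xr).1.
Qed.

Lemma S_orth {R : realType} (xl xr : R) m n : xl < xr -> (m < n)%N ->
  poly_int (shifted_legendre xl xr n * shifted_legendre xl xr m) xl xr = 0.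
Proof.
move=> h hmn.
by rewrite !S_def -comp_polyM int_comp // leg_orth // mulr0.
Qed.

Lemma S_norm {R : realType} (xl xr : R) n : xl < xr ->
  poly_int (shifted_legendre xl xr n * shifted_legendre xl xr n) xl xr
   = (xr - xl) / (n.*2.+1)%:R.
Proof.
move=> h.
rewrite !S_def -comp_polyM int_comp //.
have E := leg_norm (R:=R) n.
have -> : Lint (legendre R n * legendre R n) = 2 / (n.*2.+1)%:R.
  by rewrite -E mulfK // pnatr_eq0.
field; by rewrite paddr_eq0 ?ler01 ?ler0n // oner_eq0.
Qed.

Lemma size_drop_top {R : realType} (p q : {poly R}) m :
  (size q <= m.+1)%N -> (size p <= m.+1)%N -> p`_m != 0 ->
  (size (q - (q`_m / p`_m) *: p)%R <= m)%N.
Proof.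
move=> hq hp hpm; apply/leq_sizeP => j hj.
rewrite coefB coefZ.
case: (ltnP m j) => H.
  have -> : q`_j = 0 by apply: nth_default; exact: leq_trans hq H.
  have -> : p`_j = 0 by apply: nth_default; exact: leq_trans hp H.
  by rewrite mulr0 subr0.
have -> : j = m by lia.
by rewrite divfK // subrr.
Qed.

Lemma S_orth_gen {R : realType} (xl xr : R) n (q : {poly R}) : xl < xr ->
  (size q <= n)%N -> poly_int (shifted_legendre xl xr n * q) xl xr = 0.
Proof.
move=> h.
suff : forall m, (m <= n)%N -> forall q : {poly R}, (size q <= m)%N ->
   poly_int (shifted_legendre xl xr n * q) xl xr = 0 by move=> H; apply: H.
elim => [|m IH] hm q0 hq.
  by move: hq; rewrite size_poly_leq0 => /eqP ->; rewrite mulr0 poly_int0.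
have hsm : (shifted_legendre xl xr m)`_m != 0.
  rewrite S_coef //; apply: mulf_neq0; first exact: lt0r_neq0 (leg_coef_pos _).
  apply: expf_neq0; apply: mulf_neq0; last by rewrite pnatr_eq0.
  by rewrite invr_eq0 subr_eq0 gt_eqF.
set c := q0`_m / (shifted_legendre xl xr m)`_m.
have -> : q0 = (q0 - c *: shifted_legendre xl xr m) + c *: shifted_legendre xl xr m.
  by rewrite subrK.
rewrite mulrDr poly_intD -scalerAr poly_intZ S_orth // mulr0 addr0.
apply: IH; first by lia.
by apply: size_drop_top => //; rewrite S_size.
Qed.

Lemma all_roots_eq0 {R : realType} (p : {poly R}) (a b : R) : a < b ->
  (forall x, a <= x -> x <= b -> p.[x] = 0) -> p = 0.
Proof.
move=> hab H; apply/eqP; apply: contraT => p0.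
pose f := fun j : nat => a + (b - a) / (j.+2)%:R.
have hf : forall j, a <= f j /\ f j <= b.
  move=> j; rewrite /f.
  have h1 : (0 : R) < (j.+2)%:R by rewrite ltr0n.
  have h2 : (1 : R) <= (j.+2)%:R by rewrite ler1n.
  have h3 : 0 <= (b - a) / (j.+2)%:R by rewrite divr_ge0 // ?subr_ge0 ?ltW.
  have h4 : (b - a) / (j.+2)%:R <= b - a.
    rewrite ler_pdivrMr //; rewrite -subr_ge0 -[X in _ - X]mulr1 -mulrBr.
    by apply: mulr_ge0; rewrite subr_ge0 // ltW.
  move: h3 h4; set X := (b - a) / _; move=> h3 h4; split; lra.
have := max_poly_roots p0 (rs := [seq f j | j <- iota 0 (size p)]).
rewrite size_map size_iota ltnn; apply.
  apply/allP => x /mapP [j _ ->]; rewrite /root; have [h1 h2] := hf j.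
  by rewrite H.
rewrite map_inj_uniq ?iota_uniq // => i j; rewrite /f => /addrI E.
have hba : b - a != 0 by rewrite subr_eq0 gt_eqF.
have := mulfI hba E => /invr_inj /eqP; rewrite eqr_nat => /eqP [].
by [].
Qed.

Lemma int_sq_ge0 {R : realType} (q : {poly R}) (xl xr : R) : xl < xr ->
  0 <= poly_int (q * q) xl xr.
Proof.
move=> h; rewrite /poly_int subr_ge0.
apply: (ler_hornerW (a := xl) (b := xr)).
- by move=> x _; rewrite poly_prim_deriv hornerM -expr2 sqr_ge0.
- by rewrite in_itv /= lexx ltW.
- by rewrite in_itv /= lexx ltW.
- exact: ltW.
Qed.

Lemma int_sq_gt0 {R : realType} (q : {poly R}) (xl xr : R) : xl < xr ->
  q != 0 -> 0 < poly_int (q * q) xl xr.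
Proof.
move=> h q0; rewrite lt_neqAle int_sq_ge0 // andbT.
apply/negP => /eqP E.
have mono := ler_hornerW (a := xl) (b := xr) (p := poly_prim (q * q)).
have mono' : {in `[xl, xr] &, {homo horner (poly_prim (q * q)) : x y / x <= y}}.
  by apply: mono => x _; rewrite poly_prim_deriv hornerM -expr2 sqr_ge0.
have D0 : poly_prim (q * q) - ((poly_prim (q * q)).[xl])%:P = 0.
  apply: (all_roots_eq0 _ _ _ h) => x h1 h2.
  rewrite hornerD hornerN hornerC; apply/eqP; rewrite subr_eq0 eq_le.
  have hx : x \in `[xl, xr] by rewrite in_itv /= h1 h2.
  have hl : xl \in `[xl, xr] by rewrite in_itv /= lexx ltW.
  have hr : xr \in `[xl, xr] by rewrite in_itv /= lexx ltW.
  rewrite (mono' _ _ hl hx h1) andbT.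
  have := mono' _ _ hx hr h2.
  move: E; rewrite /poly_int => E.
  have -> : (poly_prim (q * q)).[xr] = (poly_prim (q * q)).[xl].
    by apply/eqP; rewrite -subr_eq0 E.
  by [].
have := congr1 deriv D0.
rewrite derivB derivC subr0 poly_prim_deriv deriv0 => /eqP.
by rewrite mulf_eq0 orbb (negPf q0).
Qed.

Lemma size_deriv_le {R : realType} (p : {poly R}) n :
  (size p <= n.+1)%N -> (size p^`() <= n)%N.
Proof.
move=> hp; apply/leq_sizeP => j hj; rewrite coef_deriv nth_default ?mul0rn //.
exact: leq_trans hp _.
Qed.

Lemma size_Wf {R : realType} (xr : R) (u : {poly R}) n :
  (size u <= n.+1)%N -> (size (Wf xr u) <= n.+2)%N.
Proof.
move=> hu; apply/leq_sizeP => -[|j] hj //.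
rewrite /Wf coefB coefC /= sub0r /poly_prim coef_poly.
case: ifP => _; last by rewrite oppr0.
have -> : u`_j = 0 by apply: nth_default; apply: leq_trans hu _.
by rewrite mul0r oppr0.
Qed.

Lemma coef_Wf {R : realType} (xr : R) (u : {poly R}) n :
  (Wf xr u)`_n.+1 = - (u`_n / (n.+1)%:R).
Proof.
rewrite /Wf coefB coefC /= sub0r /poly_prim coef_poly.
case: ifP => // H.
have -> : u`_n = 0.
  by apply: nth_default; move: H; rewrite ltnS => /negbT; rewrite -leqNgt.
by rewrite mul0r oppr0.
Qed.

Lemma R_top {R : realType} k (xb : nat -> R) xs A i (p : {poly R}) :
  (forall v : {poly R}, (size v <= k.*2)%N -> quad_err k xb xs A i v = 0) ->
  (size p <= k.*2.+1)%N ->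
  quad_err k xb xs A i p = p`_(k.*2) * quad_err k xb xs A i 'X^(k.*2).
Proof.
move=> c1 hp.
have hs : (size (p - (p`_(k.*2) / ('X^(k.*2) : {poly R})`_(k.*2)) *: 'X^(k.*2))%R <= k.*2)%N.
  by apply: size_drop_top => //; rewrite ?size_polyXn // coefXn eqxx oner_eq0.
move: hs; rewrite coefXn eqxx divr1 => /c1.
by rewrite quad_errB quad_errZ => /eqP; rewrite subr_eq0 => /eqP.
Qed.

Lemma B_formula {R : realType} k (xb : nat -> R) xs A i (u w : {poly R}) :
  (forall v : {poly R}, (size v <= k.+1.*2)%N -> quad_err k.+1 xb xs A i v = 0) ->
  (size u <= k.+2)%N -> (size w <= k.+2)%N ->
  Bdef k.+1 xb xs A i u w =
   (w`_k.+1 *+ k.+1) * (- (u`_k.+1 / (k.+2)%:R)) * quad_err k.+1 xb xs A i 'X^(k.+1.*2).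
Proof.
move=> c1 hu hw.
rewrite /Bdef (@R_top _ _ _ _ _ _ _ c1); last first.
  apply: leq_trans (size_polyMleq _ _) _.
  have h1 := @size_deriv_le _ _ _ hw.
  have h2 := @size_Wf _ (xb i.+1) _ _ hu.
  rewrite -addnn; lia.
have -> : (k.+1.*2 = k + k.+2)%N by rewrite -addnn; lia.
rewrite coef_mul_top; last exact: size_Wf.
  by rewrite coef_deriv coef_Wf.
exact: size_deriv_le.
Qed.

Lemma quadE {R : realType} k (xb : nat -> R) xs A i (p : {poly R}) :
  quad k xs A i p = poly_int p (xb i) (xb i.+1) - quad_err k xb xs A i p.
Proof. by rewrite /quad_err; ring. Qed.

Lemma E2_formula {R : realType} k (xb : nat -> R) xs A i :
  xb i < xb i.+1 ->
  (forall v : {poly R}, (size v <= k.+1.*2)%N -> quad_err k.+1 xb xs A i v = 0) ->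
  quad k.+1 xs A i (shifted_legendre (xb i) (xb i.+1) k.+2 * shifted_legendre (xb i) (xb i.+1) k)
  = - ((shifted_legendre (xb i) (xb i.+1) k.+2)`_k.+2 * (shifted_legendre (xb i) (xb i.+1) k)`_k)
     * quad_err k.+1 xb xs A i 'X^(k.+1.*2).
Proof.
move=> hx c1.
rewrite (quadE _ xb) S_orth // sub0r.
rewrite (@R_top _ _ _ _ _ _ _ c1); last first.
  apply: leq_trans (size_polyMleq _ _) _.
  rewrite !S_size // -addnn; lia.
have -> : (k.+1.*2 = k.+2 + k)%N by rewrite -addnn; lia.
rewrite coef_mul_top ?S_size //; ring.
Qed.

Lemma nat_pos_neq0 {R : realType} (a : R) (n : nat) : 0 < a -> a + n%:R != 0.
Proof. move=> h; apply: lt0r_neq0; have := ler0n R n; lra. Qed.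

Lemma key_arith {R : realType} (h t rho c0 c1 c2 : R) k :
  (k.+2)%:R * c2 = (k.+1.*2.+1)%:R * c1 -> (k.+1)%:R * c1 = (k.*2.+1)%:R * c0 ->
  (k.*2.+1)%:R * (h / (k.*2.+1)%:R - - (c2 * t ^+ k.+2 * (c0 * t ^+ k)) * rho)
  = (k.*2.+3)%:R * (h / (k.+1.*2.+1)%:R -
       (c1 * t ^+ k.+1 *+ k.+1) * - (c1 * t ^+ k.+1 / (k.+2)%:R) * rho).
Proof.
move=> e2 e1.
have hk1 : (k.*2.+1)%:R != 0 :> R by rewrite pnatr_eq0.
have hk2 : (k.+2)%:R != 0 :> R by rewrite pnatr_eq0.
have -> : c2 = (k.+1.*2.+1)%:R / (k.+2)%:R * c1.
  apply: (mulfI hk2); rewrite e2; field.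
  by apply: nat_pos_neq0; lra.
have -> : c0 = (k.+1)%:R / (k.*2.+1)%:R * c1.
  apply: (mulfI hk1); rewrite -e1; field.
  by apply: nat_pos_neq0; lra.
rewrite !exprS -!addnn; set T := t ^+ k.
field.
by apply/and3P; split; apply: lt0r_neq0; have := ler0n R k; lra.
Qed.

Lemma key_identity {R : realType} k (xb : nat -> R) xs A i :
  xb i < xb i.+1 ->
  (forall v : {poly R}, (size v <= k.+1.*2)%N -> quad_err k.+1 xb xs A i v = 0) ->
  let S := shifted_legendre (xb i) (xb i.+1) in
  (k.*2.+1)%:R * ((xb i.+1 - xb i) / (k.*2.+1)%:R - quad k.+1 xs A i (S k.+2 * S k))
  = (k.*2.+3)%:R * (poly_int (S k.+1 * S k.+1) (xb i) (xb i.+1) - Bdef k.+1 xb xs A i (S k.+1) (S k.+1)).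
Proof.
move=> hx c1 S.
rewrite /S E2_formula // S_norm // B_formula // ?S_size //.
rewrite !S_coef //.
apply: key_arith; [exact: leg_coef | exact: leg_coef].
Qed.

Lemma F_decomp {R : realType} k (xb : nat -> R) xs A i (u : {poly R}) :
  xb i < xb i.+1 ->
  (forall v : {poly R}, (size v <= k.+1.*2)%N -> quad_err k.+1 xb xs A i v = 0) ->
  (size u <= k.+2)%N ->
  let S := shifted_legendre (xb i) (xb i.+1) k.+1 in
  let al := u`_k.+1 / S`_k.+1 in
  let q := u - al *: S in
  poly_int (u * u) (xb i) (xb i.+1) - Bdef k.+1 xb xs A i u u
  = poly_int (q * q) (xb i) (xb i.+1)
    + al ^+ 2 * (poly_int (S * S) (xb i) (xb i.+1) - Bdef k.+1 xb xs A i S S).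
Proof.
move=> hx c1 hu S al q.
have hS : (size S <= k.+2)%N by rewrite /S S_size.
have hl : S`_k.+1 != 0.
  rewrite /S S_coef //; apply: mulf_neq0; first exact: lt0r_neq0 (leg_coef_pos _).
  apply: expf_neq0; apply: mulf_neq0; last by rewrite pnatr_eq0.
  by rewrite invr_eq0 subr_eq0 gt_eqF.
have hq : (size q <= k.+1)%N by apply: size_drop_top.
have hqS : poly_int (S * q) (xb i) (xb i.+1) = 0 by apply: S_orth_gen.
rewrite !B_formula //.
have hu' : u`_k.+1 = al * S`_k.+1 by rewrite /al divfK.
have hu2 : u = q + al *: S by rewrite /q subrK.
have -> : u * u = q * q + (al + al) *: (S * q) + (al * al) *: (S * S).
  rewrite {1 2}hu2 -!mul_polyC polyCD polyCM; ring.
rewrite !poly_intD !poly_intZ hqS hu'.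
rewrite expr2; ring.
Qed.

Lemma F_pos {R : realType} k (xb : nat -> R) xs A i (u : {poly R}) :
  xb i < xb i.+1 ->
  (forall v : {poly R}, (size v <= k.+1.*2)%N -> quad_err k.+1 xb xs A i v = 0) ->
  let S := shifted_legendre (xb i) (xb i.+1) k.+1 in
  0 < poly_int (S * S) (xb i) (xb i.+1) - Bdef k.+1 xb xs A i S S ->
  (size u <= k.+2)%N ->
  0 <= poly_int (u * u) (xb i) (xb i.+1) - Bdef k.+1 xb xs A i u u /\
  (u != 0 -> 0 < poly_int (u * u) (xb i) (xb i.+1) - Bdef k.+1 xb xs A i u u).
Proof.
move=> hx c1 S hG hu.
rewrite (@F_decomp _ _ _ _ _ _ _ hx c1 hu) -/S.
set al := u`_k.+1 / S`_k.+1.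
set q := u - al *: S.
set G := poly_int (S * S) (xb i) (xb i.+1) - Bdef k.+1 xb xs A i S S in hG *.
have hq0 := @int_sq_ge0 _ q _ _ hx.
have ha : 0 <= al ^+ 2 * G by rewrite mulr_ge0 ?sqr_ge0 // ltW.
split; first by rewrite addr_ge0.
move=> u0.
have [al0|al0] := eqVneq al 0.
  have -> : q = u by rewrite /q al0 scale0r subr0.
  rewrite al0 expr0n /= mul0r addr0.
  exact: int_sq_gt0.
rewrite ltr_pwDr //.
by rewrite mulr_gt0 // lt_neqAle sqr_ge0 andbT eq_sym sqrf_eq0 al0.
Qed.

Lemma Wf_unique {R : realType} (xr : R) (u P : {poly R}) :
  P^`() = - u -> P.[xr] = 0 -> Wf xr u = P.
Proof.
move=> hd hx.
have : (Wf xr u - P)^`() = 0 by rewrite derivB WfE hd subrr.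
move/deriv0_const => E.
have E2 := congr1 (fun p : {poly R} => p.[xr]) E.
move: E2; rewrite /= hornerD hornerN Wf_xr hx subrr hornerC => E2.
by apply/eqP; rewrite -subr_eq0 E -E2.
Qed.

Lemma Wf_Y {R : realType} (xr : R) a :
  Wf xr (('X - xr%:P) ^+ a) = - ((a.+1)%:R^-1) *: ('X - xr%:P) ^+ a.+1.
Proof.
apply: Wf_unique.
  rewrite derivZ deriv_exp derivXsubC mul1r /= -scaler_nat scalerA mulNr mulVf ?pnatr_eq0 //.
  by rewrite scaleN1r.
by rewrite hornerZ horner_exp hornerD hornerN hornerX hornerC subrr expr0n mulr0.
Qed.

Lemma B_Y {R : realType} K (xb : nat -> R) xs A i a b :
  let Y := 'X - (xb i.+1)%:P in
  Bdef K xb xs A i (Y ^+ a) (Y ^+ b) =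
    - (b%:R / (a.+1)%:R) * quad_err K xb xs A i (Y ^+ (a + b)).
Proof.
move=> Y.
rewrite /Bdef Wf_Y /Y deriv_exp derivXsubC mul1r.
case: b => [|b].
  by rewrite mulr0n mul0r quad_err0 mul0r oppr0 mul0r.
rewrite /= -scaler_nat -scalerAl -scalerAr scalerA -exprD quad_errZ.
have -> : (b + a.+1 = a + b.+1)%N by lia.
by rewrite mulrN.
Qed.

Lemma cond1_from_sym {R : realType} K (xb : nat -> R) xs A i :
  (0 < K)%N ->
  (forall v : {poly R}, (size v <= K)%N -> quad_err K xb xs A i v = 0) ->
  (forall u w : {poly R}, (size u <= K.+1)%N -> (size w <= K.+1)%N ->
      Bdef K xb xs A i u w = Bdef K xb xs A i w u) ->
  forall v : {poly R}, (size v <= K.*2)%N -> quad_err K xb xs A i v = 0.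
Proof.
move=> K0 ex sym.
set Y := 'X - (xb i.+1)%:P.
have sY : forall n, size (Y ^+ n) = n.+1.
  by move=> n; rewrite /Y size_exp_XsubC.
have hY : forall n, (n < K.*2)%N -> quad_err K xb xs A i (Y ^+ n) = 0.
  move=> n hn.
  case: (ltnP n K) => hnK; first by apply: ex; rewrite sY.
  have -> : n = (K + (n - K))%N by rewrite subnKC.
  have : (n - K < K)%N by rewrite -addnn in hn; lia.
  move: (n - K)%N => b hb.
  have h1 : (size (Y ^+ K) <= K.+1)%N by rewrite sY.
  have h2 : (size (Y ^+ b) <= K.+1)%N by rewrite sY ltnW.
  have := sym _ _ h1 h2.
  rewrite !B_Y [(b + K)%N]addnC.
  set r := quad_err K xb xs A i (Y ^+ (K + b)).
  rewrite !mulNr => /oppr_inj E.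
  have E' : r * (K%:R / b.+1%:R - b%:R / K.+1%:R) = 0.
    by rewrite mulrBr [r * (K%:R / _)]mulrC [r * (b%:R / _)]mulrC E subrr.
  move/eqP: E'; rewrite mulf_eq0 => /orP [/eqP // |].
  have hK : (K.+1%:R : R) != 0 by rewrite pnatr_eq0.
  have hb1 : (b.+1%:R : R) != 0 by rewrite pnatr_eq0.
  have -> : K%:R / b.+1%:R - b%:R / K.+1%:R =
      ((K * K.+1)%:R - (b * b.+1)%:R) / (K.+1%:R * b.+1%:R) :> R.
    rewrite !natrM; field; by rewrite !nat_pos_neq0 ?ltr01.
  rewrite mulf_eq0 invr_eq0 mulf_eq0 (negPf hK) (negPf hb1) !orbF subr_eq0 eqr_nat.
  move=> /eqP E2; exfalso.
  have : (b * b.+1 < K * K.+1)%N by apply: ltn_mul.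
  by rewrite E2 ltnn.
move=> v hv.
rewrite -(comp_polyXaddC_K v (xb i.+1)) comp_polyE.
apply: (big_ind (fun p => quad_err K xb xs A i p = 0)).
- exact: quad_err0.
- by move=> x y hx hy; rewrite quad_errD hx hy addr0.
- move=> j _; rewrite quad_errZ hY ?mulr0 //.
  apply: leq_trans (ltn_ord j) _.
  by rewrite size_comp_poly2 ?size_XaddC.
Qed.

Definition single {R : realType} (i : nat) (u : {poly R}) : nat -> {poly R} :=
  fun j => if j == i then u else 0.

Lemma form_cells {R : realType} k N (xs A : nat -> nat -> R) v w :
  Mstar_form k N xs A v w = \sum_(i < N) cellform k xs A i (v i) (w i).
Proof. by []. Qed.

Lemma form_single {R : realType} k N (xs A : nat -> nat -> R) i (u w : {poly R}) :
  (i < N)%N ->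
  Mstar_form k N xs A (single i u) (single i w) = cellform k xs A i u w.
Proof.
move=> hi; rewrite form_cells (bigD1 (Ordinal hi)) //= big1 ?addr0.
  by rewrite /single eqxx.
move=> j /eqP hj; rewrite /single.
have -> : (nat_of_ord j == i) = false.
  by apply/negbTE/eqP => E; apply: hj; apply: val_inj.
by rewrite /cellform big1 // => m _; rewrite poly_int0 mulr0.
Qed.

Lemma in_Vk_single {R : realType} k N i (u : {poly R}) :
  (size u <= k.+1)%N -> in_Vk k N (single i u).
Proof. by move=> hu j _; rewrite /single; case: ifP => // _; rewrite size_poly0. Qed.

Theorem theorem3p5 (R : realType) (k N : nat) (a b : R)
    (xb : nat -> R) (xs A : nat -> nat -> R) :
  (1 <= k)%N -> (0 < N)%N ->
  xb 0%N = a -> xb N = b ->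
  (forall i, (i < N)%N -> xb i < xb i.+1) ->
  (forall i, (i < N)%N -> xs i 0%N = xb i /\ xs i k.+1 = xb i.+1) ->
  (forall i j, (i < N)%N -> (j <= k)%N -> xs i j < xs i j.+1) ->
  (forall i (v : {poly R}), (i < N)%N -> (size v <= k)%N ->
      quad_err k xb xs A i v = 0) ->
  (is_inner_product_on_Vk k N xs A <->
   forall i, (i < N)%N ->
     (forall v : {poly R}, (size v <= k.*2)%N -> quad_err k xb xs A i v = 0) /\
     0 < (xb i.+1 - xb i) / (k.*2.-1)%:R
           - quad k xs A i (shifted_legendre (xb i) (xb i.+1) k.+1
                            * shifted_legendre (xb i) (xb i.+1) k.-1)).
Proof.
case: k => [//|k] _ N0 _ _ hx hxs _ hex.
have CI : forall i (u w : {poly R}), (i < N)%N ->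
    cellform k.+1 xs A i u w = poly_int (u * w) (xb i) (xb i.+1) - Bdef k.+1 xb xs A i u w.
  by move=> i u w hi; have [h0 h1] := hxs i hi; apply: cell_identity.
have KI : forall i, (i < N)%N ->
   (forall v : {poly R}, (size v <= k.+1.*2)%N -> quad_err k.+1 xb xs A i v = 0) ->
   (0 < (xb i.+1 - xb i) / (k.+1.*2.-1)%:R
        - quad k.+1 xs A i (shifted_legendre (xb i) (xb i.+1) k.+2
                            * shifted_legendre (xb i) (xb i.+1) k.+1.-1)
    <-> 0 < poly_int (shifted_legendre (xb i) (xb i.+1) k.+1 * shifted_legendre (xb i) (xb i.+1) k.+1) (xb i) (xb i.+1)
       - Bdef k.+1 xb xs A i (shifted_legendre (xb i) (xb i.+1) k.+1) (shifted_legendre (xb i) (xb i.+1) k.+1)).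
  move=> i hi c1.
  have := @key_identity R k xb xs A i (hx i hi) c1 => /= E.
  rewrite -(pmulr_rgt0 _ (ltr0n R (k.*2.+1))) E.
  by rewrite pmulr_rgt0 ?ltr0n.
split.
- move=> [sym pos] i hi.
  have symB : forall u w : {poly R}, (size u <= k.+2)%N -> (size w <= k.+2)%N ->
      Bdef k.+1 xb xs A i u w = Bdef k.+1 xb xs A i w u.
    move=> u w hu hw.
    have := sym (single i u) (single i w) (@in_Vk_single _ _ N i _ hu) (@in_Vk_single _ _ N i _ hw).
    by rewrite !form_single // !CI // mulrC => /addrI /oppr_inj.
  have c1 := @cond1_from_sym _ k.+1 xb xs A i (ltn0Sn k) (fun v hv => hex i v hi hv) symB.
  split => //.
  apply/(KI i hi c1).
  set S := shifted_legendre (xb i) (xb i.+1) k.+1.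
  have hS : (size S <= k.+2)%N by rewrite /S S_size // hx.
  have S0 : S != 0 by rewrite -size_poly_gt0 /S S_size // hx.
  have := pos (single i S) (@in_Vk_single _ _ N i _ hS).
  rewrite form_single // CI //; apply.
  by exists i; split => //; rewrite /single eqxx.
- move=> H.
  have Gpos : forall i, (i < N)%N -> forall u : {poly R}, (size u <= k.+2)%N ->
      0 <= cellform k.+1 xs A i u u /\ (u != 0 -> 0 < cellform k.+1 xs A i u u).
    move=> i hi u hu.
    have [c1 e2] := H i hi.
    rewrite CI //.
    apply: F_pos => //; first exact: hx.
    by apply/(KI i hi c1).
  split.
  + move=> v w hv hw.
    rewrite !form_cells; apply: eq_bigr => -[i hi] _ /=.
    have [c1 _] := H i hi.
    rewrite !CI // mulrC.
    rewrite !B_formula ?(hv i hi) ?(hw i hi) //; ring.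
  + move=> v hv [i0 [hi0 nz]].
    rewrite form_cells (bigD1 (Ordinal hi0)) //=.
    have h1 := (Gpos i0 hi0 (v i0) (hv i0 hi0)).2 nz.
    have h2 : 0 <= \sum_(i < N | i != Ordinal hi0) cellform k.+1 xs A i (v i) (v i).
      apply: sumr_ge0 => -[i hi] _.
      exact: (Gpos i hi (v i) (hv i hi)).1.
    move: h1 h2.
    set x := cellform _ _ _ _ _ _; set y := \sum_(_ < _ | _) _.
    lra.
Qed.
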